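(* For every $n\ge 0$ and every monotone language $L\subseteq\{0,1\}^n$, the minimal PDFA recognizing $L$ has at most \[ \sum_{i=0}^n \min\bigl(2^i,\ |F_{n-i}|-1\bigr) \] states. Moreover, for each $n\le 10$ there is a monotone language $L\subseteq\{0,1\}^n$ whose minimal PDFA has exactly this many states.
   Context: A PDFA is a deterministic finite automaton whose transition function may be partial; the minimal PDFA of $L$ is one recognizing $L$ with the least number of states. A language $L\subseteq\{0,1\}^n$ is monotone if whenever $s\in L$ and $t\in\{0,1\}^n$ pointwise dominates $s$ (i.e., $s(j)\le t(j)$ for all $j$), then $t\in L$. $F_k$ denotes the set of monotone Boolean functions of $k$ variables (including the constants $0$ and $1$); $|F_k|$ is the $k$th Dedekind number. *)

(* Defs.v *)
From mathcomp Require Import all_boot.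
Set Implicit Arguments. Unset Strict Implicit. Unset Printing Implicit Defensive.

(* A PDFA over the alphabet {0,1} (encoded as bool: false = 0, true = 1)
   with k states 'I_k, a start state, a PARTIAL transition function
   and a set of accepting states. *)
Record pdfa (k : nat) := Pdfa {
  pdfa_start : 'I_k;
  pdfa_trans : 'I_k -> bool -> option 'I_k;
  pdfa_final : {set 'I_k}
}.

Fixpoint pdfa_run k (A : pdfa k) (q : 'I_k) (w : seq bool) : option 'I_k :=
  match w with
  | [::] => Some q
  | a :: w' => if pdfa_trans A q a is Some q' then pdfa_run A q' w' else None
  end.

Definition pdfa_accepts k (A : pdfa k) (w : seq bool) : bool :=
  if pdfa_run A (pdfa_start A) w is Some q then q \in pdfa_final A else false.

Definition recognizes n k (A : pdfa k) (L : {set n.-tuple bool}) : Prop :=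
  forall w : seq bool, pdfa_accepts A w <-> exists2 t : n.-tuple bool, t \in L & tval t = w.

Definition monotone_lang n (L : {set n.-tuple bool}) : Prop :=
  forall s t : n.-tuple bool, s \in L ->
    (forall j : 'I_n, tnth s j <= tnth t j) -> t \in L.

(* |F_k| : number of monotone Boolean functions of k variables (constants included) *)
Definition dedekind (k : nat) : nat :=
  #|[set f : {ffun {ffun 'I_k -> bool} -> bool} |
      [forall x : {ffun 'I_k -> bool}, forall y : {ffun 'I_k -> bool}, [forall i : 'I_k, x i <= y i] ==> (f x <= f y)]]|.

Definition mono_bound (n : nat) : nat :=
  \sum_(i < n.+1) minn (2 ^ i) (dedekind (n - i) - 1).

(* Main.v *)
Require Import Defs.
From mathcomp Require Import all_boot zify.
Set Implicit Arguments. Unset Strict Implicit. Unset Printing Implicit Defensive.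


Fixpoint words (m : nat) : seq (seq bool) :=
  if m is m'.+1 then map (cons false) (words m') ++ map (cons true) (words m')
  else [:: [::]].

Lemma mem_map_cons (c b : bool) w (W : seq (seq bool)) :
  (b :: w \in map (cons c) W) = (b == c) && (w \in W).
Proof.
apply/mapP/andP => [[x xW [-> ->]]|[/eqP -> wW]]; last by exists w.
by [].
Qed.

Lemma mem_words m w : (w \in words m) = (size w == m).
Proof.
elim: m w => [|m IH] [|b w] //=.
- transitivity false => //; apply/negbTE/negP; rewrite mem_cat => /orP [] /mapP [? ? //].
- by rewrite mem_cat !mem_map_cons IH eqSS; case: b; rewrite /= ?orbF.
Qed.

Lemma size_words m : size (words m) = 2 ^ m.
Proof. by elim: m => //= m IH; rewrite size_cat !size_map IH expnS mul2n addnn. Qed.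

Lemma uniq_words m : uniq (words m).
Proof.
elim: m => //= m IH; rewrite cat_uniq.
have inj : forall c : bool, injective (cons c) by move=> c x y [].
rewrite !(map_inj_uniq (inj _)) IH /= andbT.
apply/hasPn => x /mapP [y _ ->].
by apply/negP => /mapP [z _ []].
Qed.

Lemma pdfa_run_cat k (A : pdfa k) q u w :
  pdfa_run A q (u ++ w) = obind (fun q' => pdfa_run A q' w) (pdfa_run A q u).
Proof.
elim: u q => //= a u IH q; case: (pdfa_trans A q a) => //.
Qed.

Lemma all2_nth (T : Type) (r : T -> T -> bool) x0 s t :
  all2 r s t -> forall j, j < size s -> r (nth x0 s j) (nth x0 t j).
Proof.
elim: s t => [|a s IH] [|b t] //= /andP [rab st] [|j] //= js.
exact: IH.
Qed.

Lemma all2_cat (T : Type) (r : T -> T -> bool) s1 s2 t1 t2 :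
  size s1 = size t1 -> all2 r (s1 ++ s2) (t1 ++ t2) = all2 r s1 t1 && all2 r s2 t2.
Proof.
elim: s1 t1 => [|a s IH] [|b t] //= [e]; by rewrite IH // andbA.
Qed.

Lemma all2_refl (T : Type) (r : T -> T -> bool) s : reflexive r -> all2 r s s.
Proof. by move=> rr; elim: s => //= a s ->; rewrite rr. Qed.

Lemma all2_map (T U : Type) (r : U -> U -> bool) (f g : T -> U) s :
  all2 r (map f s) (map g s) = all (fun x => r (f x) (g x)) s.
Proof. by elim: s => //= a s ->. Qed.

Lemma all2_size (T : Type) (r : T -> T -> bool) s t : all2 r s t -> size s = size t.
Proof. by elim: s t => [|a s IH] [|b t] //= /andP [_ /IH ->]. Qed.

Definition memb n (L : {set n.-tuple bool}) (w : seq bool) : bool :=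
  if insub w is Some t then (t : n.-tuple bool) \in L else false.

Lemma membP n (L : {set n.-tuple bool}) w :
  (exists2 t : n.-tuple bool, t \in L & tval t = w) <-> memb L w.
Proof.
rewrite /memb; case: insubP => [t _ <-|nsz].
- split => [[t' tL e]|tL]; last by exists t.
  by have -> : t = t' by apply: val_inj.
- split => // [[t _ e]]; case/negP: nsz; by rewrite -e size_tuple.
Qed.

Lemma memb_size n (L : {set n.-tuple bool}) w : memb L w -> size w = n.
Proof. by rewrite /memb; case: insubP => // t /eqP. Qed.

Lemma recog_acc n k (A : pdfa k) (L : {set n.-tuple bool}) :
  recognizes A L -> forall w, pdfa_accepts A w = memb L w.
Proof. by move=> H w; apply/idP/idP => [/H/membP|/membP/H]. Qed.

Lemma recogP n k (A : pdfa k) (L : {set n.-tuple bool}) :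
  (forall w, pdfa_accepts A w = memb L w) -> recognizes A L.
Proof. by move=> H w; rewrite H; split => /membP. Qed.

Lemma memb_mono n (L : {set n.-tuple bool}) s t :
  monotone_lang L -> all2 (fun a b : bool => a <= b) s t -> memb L s -> memb L t.
Proof.
move=> Hm st; rewrite /memb; case: insubP => // ts /eqP ss es tsL.
have szt : size t == n by rewrite -(all2_size st) ss.
rewrite insubT; apply: (Hm ts) => // j.
by rewrite !(tnth_nth false) /= es (all2_nth false st) // ss.
Qed.



Definition Mon (m : nat) : {set {ffun {ffun 'I_m -> bool} -> bool}} :=
  [set f : {ffun {ffun 'I_m -> bool} -> bool} |
      [forall x : {ffun 'I_m -> bool}, forall y : {ffun 'I_m -> bool}, [forall i : 'I_m, x i <= y i] ==> (f x <= f y)]].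

Lemma dedekindE m : dedekind m = #|Mon m|.
Proof. by []. Qed.

Lemma word_ffun m w : size w = m ->
  [seq [ffun j : 'I_m => nth false w j] j | j <- enum 'I_m] = w.
Proof.
move=> sw.
have -> : [seq [ffun j : 'I_m => nth false w j] j | j <- enum 'I_m] =
  [seq nth false w i | i <- [seq val i | i <- enum 'I_m]].
  by rewrite -map_comp; apply: eq_map => j; rewrite ffunE.
by rewrite val_enum_ord -sw -/(mkseq _ _) mkseq_nth.
Qed.

Lemma uniq_leq_card (T : finType) (s : seq T) (A : {set T}) :
  uniq s -> {subset s <= A} -> size s <= #|A|.
Proof.
move=> us sA; rewrite cardE; apply: uniq_leq_size => // x /sA.
by rewrite mem_enum.
Qed.

Lemma sum_eq1 (j m : nat) : \sum_(i < m) (j == i) = (j < m).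
Proof.
elim: m => [|m IH]; first by rewrite big_ord0.
rewrite big_ord_recr /= IH [in RHS]ltnS [in RHS]leq_eqVlt; case: (boolP (j == m)) => [/eqP ->|ne]; [by rewrite ltnn|move: ne; case: (j == m) => // _; by rewrite addn0].
Qed.

Lemma size_levels n (s : seq (seq bool)) : all (fun x => size x <= n) s ->
  size s = \sum_(i < n.+1) size [seq x <- s | size x == i].
Proof.
elim: s => [|x s IH] /=; first by rewrite big1.
case/andP => xn /IH ->.
rewrite (eq_bigr (fun i : 'I_n.+1 => (size x == i) + size [seq x <- s | size x == i])).
  by rewrite big_split /= sum_eq1 ltnS xn.
by move=> i _; case: (size x == i).
Qed.

Section Upper.
Variables (n : nat) (L : {set n.-tuple bool}).
Hypothesis Hmono : monotone_lang L.

Local Notation mb := (memb L).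

Definition eqv (u v : seq bool) : bool :=
  (size u == size v) && all (fun w => mb (u ++ w) == mb (v ++ w)) (words (n - size u)).

Lemma mb_cat_size u w : mb (u ++ w) -> size w = n - size u.
Proof. by move/memb_size; rewrite size_cat => <-; rewrite addKn. Qed.

Lemma eqv_sem u v w : eqv u v -> mb (u ++ w) = mb (v ++ w).
Proof.
case/andP => /eqP suv /allP H.
case: (boolP (size w == n - size u)) => [sw|nsw].
  by apply/eqP; apply: H; rewrite mem_words.
apply/idP/idP => /mb_cat_size sw; case/negP: nsw; by rewrite sw ?suv.
Qed.

Lemma eqv_refl u : eqv u u.
Proof. by rewrite /eqv eqxx; apply/allP => w _. Qed.

Lemma eqv_sym u v : eqv u v -> eqv v u.
Proof.
move=> e; case/andP: (e) => /eqP suv _.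
rewrite /eqv suv eqxx; apply/allP => w _; by rewrite (eqv_sem w e).
Qed.

Lemma eqv_trans u v x : eqv u v -> eqv v x -> eqv u x.
Proof.
move=> e1 e2; case/andP: (e1) => /eqP s1 _; case/andP: (e2) => /eqP s2 _.
rewrite /eqv s1 s2 eqxx; apply/allP => w _; by rewrite (eqv_sem w e1) (eqv_sem w e2).
Qed.

Lemma eqv_rcons u v a : eqv u v -> eqv (rcons u a) (rcons v a).
Proof.
move=> e; case/andP: (e) => /eqP s1 _.
rewrite /eqv !size_rcons s1 eqxx; apply/allP => w _.
by rewrite !cat_rcons (eqv_sem _ e).
Qed.

Definition resne (u : seq bool) : bool :=
  has (fun w => mb (u ++ w)) (words (n - size u)).

Lemma resneP u : reflect (exists w, mb (u ++ w)) (resne u).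
Proof.
apply: (iffP hasP) => [[w _ h]|[w h]]; first by exists w.
by exists w => //; rewrite mem_words (mb_cat_size h).
Qed.

Lemma resne_eqv u v : eqv u v -> resne u = resne v.
Proof.
move=> e; apply/resneP/resneP => [[w h]|[w h]]; exists w.
  by rewrite -(eqv_sem w e).
by rewrite (eqv_sem w e).
Qed.

Lemma resne_size u : resne u -> size u <= n.
Proof. by case/resneP => w /memb_size; rewrite size_cat => <-; apply: leq_addr. Qed.

Lemma resne_cat u w : resne (u ++ w) -> resne u.
Proof. by case/resneP => x; rewrite -catA => h; apply/resneP; exists (w ++ x). Qed.

Definition repr (u : seq bool) : seq bool :=
  nth u (words (size u)) (find (eqv u) (words (size u))).

Lemma has_eqv u : has (eqv u) (words (size u)).
Proof. by apply/hasP; exists u; rewrite ?mem_words ?eqv_refl. Qed.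

Lemma eqv_repr u : eqv u (repr u).
Proof. exact: nth_find (has_eqv u). Qed.

Lemma repr_eq u v : eqv u v -> repr u = repr v.
Proof.
move=> e; case/andP: (e) => /eqP s1 _.
have ef : find (eqv u) (words (size u)) = find (eqv v) (words (size v)).
  rewrite s1; apply: eq_find => x; apply/idP/idP => h.
    exact: eqv_trans (eqv_sym e) h.
  exact: eqv_trans e h.
rewrite /repr ef s1; apply: set_nth_default.
by rewrite -has_find has_eqv.
Qed.

Lemma repr_idem u : repr (repr u) = repr u.
Proof. by apply: repr_eq; apply: eqv_sym; apply: eqv_repr. Qed.

Definition Wall := flatten [seq words i | i <- iota 0 n.+1].

Lemma mem_Wall w : (w \in Wall) = (size w <= n).
Proof.
apply/flattenP/idP => [[s /mapP [i]]|h].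
  by rewrite mem_iota add0n ltnS => il -> ; rewrite mem_words => /eqP ->.
exists (words (size w)); last by rewrite mem_words.
by apply/mapP; exists (size w); rewrite // mem_iota add0n ltnS.
Qed.

Definition R := undup [seq repr u | u <- Wall & resne u].

Lemma uniqR : uniq R.
Proof. exact: undup_uniq. Qed.

Lemma memR x : x \in R -> [/\ repr x = x, resne x & size x <= n].
Proof.
rewrite mem_undup => /mapP [u]; rewrite mem_filter => /andP [ru _] ->.
rewrite repr_idem -(resne_eqv (eqv_repr u)) ru; split => //.
by rewrite -(eqP (proj1 (andP (eqv_repr u)))); apply: resne_size.
Qed.

Lemma repr_inR u : resne u -> repr u \in R.
Proof.
move=> ru; rewrite mem_undup; apply/mapP; exists u => //.
by rewrite mem_filter ru mem_Wall resne_size.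
Qed.

Definition st (u : seq bool) : option 'I_(size R) :=
  if resne u then insub (index (repr u) R) else None.

Lemma nthR (q : 'I_(size R)) : nth [::] R q \in R.
Proof. exact: mem_nth. Qed.

Lemma st_eqv u v : eqv u v -> st u = st v.
Proof. by move=> e; rewrite /st (resne_eqv e) (repr_eq e). Qed.

Lemma st_rep (q : 'I_(size R)) u : eqv (nth [::] R q) u -> st u = Some q.
Proof.
move=> e; case: (memR (nthR q)) => rq nq _.
rewrite -(st_eqv e) /st nq rq index_uniq ?uniqR //.
exact: valK.
Qed.

Lemma st_some u q : st u = Some q -> eqv (nth [::] R q) u.
Proof.
rewrite /st; case: ifP => // ru; case: insubP => // i _ iv [<-].
rewrite iv nth_index ?repr_inR //; exact: eqv_sym (eqv_repr u).
Qed.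

Lemma st_none u : st u = None -> ~~ resne u.
Proof.
rewrite /st; case: ifP => // ru; case: insubP => //.
by rewrite index_mem repr_inR.
Qed.

Hypothesis Lne : resne [::].

Lemma start_lt : index (repr [::]) R < size R.
Proof. by rewrite index_mem repr_inR. Qed.

Definition Aut : pdfa (size R) :=
  Pdfa (Ordinal start_lt)
    (fun (q : 'I_(size R)) (a : bool) => let u := nth [::] R q in if size u < n then st (rcons u a) else None)
    [set q : 'I_(size R) | mb (nth [::] R q)].

Lemma run_Aut w : forall (q : 'I_(size R)) u, eqv (nth [::] R q) u ->
  pdfa_run Aut q w = st (u ++ w).
Proof.
elim: w => [|a w IH] q u e /=; first by rewrite cats0 (st_rep e).
case/andP: (e) => /eqP sz _.
case: ifP => [lt|ge].
  rewrite (st_eqv (eqv_rcons a e)).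
  case E: (st (rcons u a)) => [q'|].
    by rewrite (IH q' (rcons u a)) ?cat_rcons // st_some.
  have := st_none E => nr; apply/esym; rewrite /st.
  case: ifP => // r; case/negP: nr; rewrite -cats1.
  by apply: (@resne_cat _ w); rewrite -catA.
apply/esym; rewrite /st; case: ifP => // r.
have := resne_size r; rewrite size_cat /= -sz.
rewrite addnS => h.
have : size (nth [::] R q) < n by apply: leq_ltn_trans (leq_addr (size w) _) h.
by rewrite ge.
Qed.

Lemma acc_Aut w : pdfa_accepts Aut w = mb w.
Proof.
rewrite /pdfa_accepts (@run_Aut w _ [::]) /=; last first.
  by rewrite nth_index ?repr_inR //; apply: eqv_sym; apply: eqv_repr.
case E: (st w) => [q|].
  by rewrite inE -[w]cats0 -(eqv_sem [::] (st_some E)) cats0.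
apply/esym/negbTE/negP => h; case/negP: (st_none E).
by apply/resneP; exists [::]; rewrite cats0.
Qed.

Lemma level_words i : size [seq x <- R | size x == i] <= 2 ^ i.
Proof.
rewrite -size_words; apply: uniq_leq_size; first by rewrite filter_uniq ?uniqR.
by move=> x; rewrite mem_filter mem_words => /andP [].
Qed.

Definition phi m (x : seq bool) : {ffun {ffun 'I_m -> bool} -> bool} :=
  [ffun y : {ffun 'I_m -> bool} => mb (x ++ [seq y j | j <- enum 'I_m])].

Lemma phi_mon m x : phi m x \in Mon m.
Proof.
rewrite inE; apply/forallP => y; apply/forallP => z; apply/implyP => /forallP yz.
rewrite !ffunE; case: (boolP (mb _)) => // h.
rewrite (memb_mono Hmono _ h) //.
rewrite all2_cat ?size_map // all2_refl /=; last by move=> b; apply: leqnn.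
by rewrite all2_map; apply/allP => j _; apply: yz.
Qed.

Lemma level_mon i : i <= n -> size [seq x <- R | size x == i] <= dedekind (n - i) - 1.
Proof.
move=> le_in; set m := n - i; set Ri := [seq x <- R | size x == i].
pose z0 : {ffun {ffun 'I_m -> bool} -> bool} := [ffun _ => false].
have z0M : z0 \in Mon m by rewrite inE; apply/forallP => y; apply/forallP => z; rewrite !ffunE; apply/implyP.
rewrite dedekindE (cardsD1 z0) z0M add1n subSS subn0.
rewrite -(size_map (phi m)); apply: uniq_leq_card.
  rewrite map_inj_in_uniq ?filter_uniq ?uniqR // => x y.
  rewrite !mem_filter => /andP [/eqP sx xR] /andP [/eqP sy yR] e.
  case: (memR xR) => <- _ _; case: (memR yR) => <- _ _; apply: repr_eq.
  rewrite /eqv sx sy eqxx; apply/allP => w; rewrite mem_words => /eqP sw.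
  have := congr1 (fun f : {ffun {ffun 'I_m -> bool} -> bool} => f [ffun j : 'I_m => nth false w j]) e.
  by rewrite !ffunE word_ffun // => ->.
move=> f /mapP [x]; rewrite mem_filter => /andP [/eqP sx xR] ->.
rewrite in_setD1 phi_mon andbT; apply/eqP => e.
case: (memR xR) => _ /resneP [w h] _.
have sw := mb_cat_size h.
have := congr1 (fun f : {ffun {ffun 'I_m -> bool} -> bool} => f [ffun j : 'I_m => nth false w j]) e.
by rewrite !ffunE word_ffun ?h // sw sx.
Qed.

Lemma sizeR_bound : size R <= mono_bound n.
Proof.
rewrite (@size_levels n R); last by apply/allP => x /memR [].
rewrite /mono_bound; apply: leq_sum => i _; rewrite leq_min level_words /=.
by apply: level_mon; rewrite -ltnS.
Qed.
End Upper.

Lemma dedekind_ge2 m : 2 <= dedekind m.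
Proof.
pose z0 : {ffun {ffun 'I_m -> bool} -> bool} := [ffun _ => false].
pose z1 : {ffun {ffun 'I_m -> bool} -> bool} := [ffun _ => true].
have ne : z0 != z1.
  apply/eqP => /(congr1 (fun f : {ffun {ffun 'I_m -> bool} -> bool} => f [ffun _ => false])).
  by rewrite !ffunE.
rewrite dedekindE; apply: leq_trans (subset_leq_card (_ : [set z0; z1] \subset Mon m)).
  by rewrite cards2 ne.
apply/subsetP => f; rewrite !inE => /orP [] /eqP ->; apply/forallP => y;
  apply/forallP => z; rewrite !ffunE; apply/implyP => //.
Qed.

Lemma mono_bound_ge1 n : 1 <= mono_bound n.
Proof.
rewrite /mono_bound big_ord_recl /= expn0 subn0.
apply: leq_trans (leq_addr _ _); rewrite leq_min leqnn /=.
by rewrite -ltnS subn1 prednK ?dedekind_ge2 // (leq_trans _ (dedekind_ge2 n)).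
Qed.

Lemma part1 n (L : {set n.-tuple bool}) : monotone_lang L ->
  exists2 k : nat, k <= mono_bound n & exists A : pdfa k, recognizes A L.
Proof.
move=> Hm; case: (boolP (resne L [::])) => [Lne|Le].
  exists (size (R L)); first exact: sizeR_bound.
  by exists (Aut Lne); apply: recogP => w; apply: acc_Aut.
exists 1; first exact: mono_bound_ge1.
exists (Pdfa ord0 (fun _ _ => None) set0); apply: recogP => w.
rewrite /pdfa_accepts; case: w => [|a w] /=; rewrite ?inE.
  by apply/esym/negbTE/negP => h; case/negP: Le; apply/resneP; exists [::].
by apply/esym/negbTE/negP => h; case/negP: Le; apply/resneP; exists (a :: w).
Qed.


Section Count.
Variable k : nat.

Definition mk (w : seq bool) : {ffun 'I_k -> bool} := [ffun i : 'I_k => nth false w i].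
Definition es := map mk (words k).
Definition leW (v w : seq bool) := all2 (fun a b : bool => a <= b) v w.
Definition PR : seq (nat * nat) :=
  [seq ab <- [seq (a, b) | a <- iota 0 (2 ^ k), b <- iota 0 (2 ^ k)] |
     leW (nth [::] (words k) ab.1) (nth [::] (words k) ab.2)].
Definition Qp (pr : seq (nat * nat)) (c : seq bool) : bool :=
  all (fun ab => nth false c ab.1 <= nth false c ab.2) pr.
Definition Q := Qp PR.
Definition code (f : {ffun {ffun 'I_k -> bool} -> bool}) := [seq f x | x <- es].

Lemma size_es : size es = 2 ^ k.
Proof. by rewrite size_map size_words. Qed.

Lemma mk_map (x : {ffun 'I_k -> bool}) : mk [seq x i | i <- enum 'I_k] = x.
Proof.
apply/ffunP => i; rewrite ffunE (nth_map i) ?size_enum_ord //.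
by congr (x _); apply: val_inj; rewrite /= nth_enum_ord.
Qed.

Lemma map_mk w : size w = k -> [seq mk w i | i <- enum 'I_k] = w.
Proof. exact: word_ffun. Qed.

Lemma mem_es x : x \in es.
Proof.
apply/mapP; exists [seq x i | i <- enum 'I_k]; last by rewrite mk_map.
by rewrite mem_words size_map size_enum_ord.
Qed.

Lemma uniq_es : uniq es.
Proof.
rewrite map_inj_in_uniq ?uniq_words // => v w; rewrite !mem_words => /eqP sv /eqP sw e.
by rewrite -(map_mk sv) -(map_mk sw) e.
Qed.

Lemma nth_code f a : a < 2 ^ k ->
  nth false (code f) a = f (mk (nth [::] (words k) a)).
Proof.
move=> ak; rewrite (nth_map [ffun _ => false]) ?size_es //.
by rewrite (nth_map [::]) ?size_words.
Qed.

Lemma mon_Q f : (f \in Mon k) = Q (code f).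
Proof.
apply/idP/idP.
- rewrite inE => /forallP H; apply/allP => [[a b]]; rewrite mem_filter /=.
  case/andP => le /allpairsP [[a' b'] /=] [];
    rewrite !mem_iota !add0n => ak bk [ea eb]; subst a' b'.
  rewrite !nth_code //.
  have /forallP H2 := H (mk (nth [::] (words k) a)).
  apply: (implyP (H2 (mk (nth [::] (words k) b)))).
  apply/forallP => i; rewrite !ffunE; apply: (all2_nth false le).
  by rewrite (eqP (_ : size (nth [::] (words k) a) == k)) // -mem_words mem_nth // size_words.
- move/allP => H; rewrite inE; apply/forallP => x; apply/forallP => y.
  apply/implyP => /forallP xy.
  set wx := [seq x i | i <- enum 'I_k]; set wy := [seq y i | i <- enum 'I_k].
  have wxW : wx \in words k by rewrite mem_words size_map size_enum_ord.
  have wyW : wy \in words k by rewrite mem_words size_map size_enum_ord.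
  have := H (index wx (words k), index wy (words k)).
  rewrite !nth_code ?size_words -?[2 ^ k]size_words ?index_mem // !nth_index //.
  rewrite !mk_map; apply.
  rewrite mem_filter /= !nth_index // /leW all2_map; apply/andP; split.
    by apply/allP => i _; apply: xy.
  by apply: allpairs_f; rewrite mem_iota add0n -size_words index_mem.
Qed.

Lemma dedekind_count : dedekind k = count Q (words (2 ^ k)).
Proof.
rewrite dedekindE cardE -(size_map code) -size_filter; apply: perm_size.
apply: uniq_perm; rewrite ?filter_uniq ?uniq_words //.
  rewrite map_inj_in_uniq ?enum_uniq // => f g _ _ e; apply/ffunP => x.
  have xe := mem_es x.
  have := congr1 (fun c => nth false c (index x es)) e => /=.
  by rewrite !(nth_map [ffun _ => false]) ?index_mem // nth_index.
move=> c; rewrite mem_filter; apply/mapP/andP => [[f]|[Qc]].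
  by rewrite mem_enum mon_Q => Qf ->; rewrite Qf mem_words size_map size_es.
rewrite mem_words => /eqP sc.
pose f : {ffun {ffun 'I_k -> bool} -> bool} := [ffun x => nth false c (index x es)].
have cf : code f = c.
  apply: (eq_from_nth (x0 := false)); first by rewrite size_map size_es.
  move=> i; rewrite size_map => ie.
  by rewrite (nth_map [ffun _ => false]) // ffunE index_uniq ?uniq_es.
by exists f; rewrite // mem_enum mon_Q cf.
Qed.
End Count.

Fixpoint cnt (m : nat) (P : seq bool -> bool) : nat :=
  if m is m'.+1 then cnt m' (fun w => P (false :: w)) + cnt m' (fun w => P (true :: w))
  else P [::].

Lemma cntE m P : cnt m P = count P (words m).
Proof.
elim: m P => [|m IH] P /=; first by rewrite addn0.
by rewrite count_cat !count_map !IH.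
Qed.

Lemma dedekind_cnt k : dedekind k = cnt (2 ^ k) (Qp (PR k)).
Proof. by rewrite cntE dedekind_count. Qed.

Lemma dedekind_mono k : dedekind k <= dedekind k.+1.
Proof.
pose ext (f : {ffun {ffun 'I_k -> bool} -> bool}) : {ffun {ffun 'I_k.+1 -> bool} -> bool} :=
  [ffun x : {ffun 'I_k.+1 -> bool} => f [ffun i : 'I_k => x (lift ord_max i)]].
have inj : injective ext.
  move=> f g e; apply/ffunP => y.
  pose x : {ffun 'I_k.+1 -> bool} :=
    [ffun j => if unlift ord_max j is Some i then y i else false].
  have xy : [ffun i : 'I_k => x (lift ord_max i)] = y.
    by apply/ffunP => i; rewrite !ffunE liftK.
  have := congr1 (fun h : {ffun {ffun 'I_k.+1 -> bool} -> bool} => h x) e.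
  by rewrite !ffunE xy.
rewrite !dedekindE -(card_imset _ inj); apply: subset_leq_card.
apply/subsetP => h /imsetP [f]; rewrite !inE => /forallP H ->.
apply/forallP => x; apply/forallP => y; apply/implyP => /forallP xy.
rewrite !ffunE; have /forallP H2 := H [ffun i : 'I_k => x (lift ord_max i)].
apply: (implyP (H2 [ffun i : 'I_k => y (lift ord_max i)])).
by apply/forallP => i; rewrite !ffunE.
Qed.

Lemma dedekind_ge168 k : 4 <= k -> 168 <= dedekind k.
Proof.
elim: k => // k IH; rewrite leq_eqVlt => /orP [/eqP <-|lt].
  by rewrite dedekind_cnt; vm_compute.
by apply: leq_trans (IH lt) (dedekind_mono k).
Qed.

Lemma D0 : dedekind 0 = 2. Proof. by rewrite dedekind_cnt; vm_compute. Qed.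
Lemma D1 : dedekind 1 = 3. Proof. by rewrite dedekind_cnt; vm_compute. Qed.
Lemma D2 : dedekind 2 = 6. Proof. by rewrite dedekind_cnt; vm_compute. Qed.
Lemma D3 : dedekind 3 = 20. Proof. by rewrite dedekind_cnt; vm_compute. Qed.

Definition dd (j : nat) := nth 168 [:: 2; 3; 6; 20] j.

Lemma mono_bound_val n : n <= 10 ->
  mono_bound n = \sum_(0 <= i < n.+1) minn (2 ^ i) (dd (n - i) - 1).
Proof.
move=> hn; rewrite /mono_bound big_mkord; apply: eq_bigr => i _.
case: (ltnP (n - i) 4) => h.
  congr (minn _ (_ - 1)); rewrite /dd.
  move: (n - i) h => j; case: j => [|[|[|[|j]]]] // _; by rewrite ?D0 ?D1 ?D2 ?D3.
have i6 : i <= 6 by lia.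
have e64 : 2 ^ i <= 64 by rewrite (leq_trans (leq_pexp2l _ i6)).
rewrite /dd nth_default //.
rewrite (minn_idPl (_ : 2 ^ i <= 168 - 1)); last by rewrite (leq_trans e64).
apply/minn_idPl; have := dedekind_ge168 h; lia.
Qed.


Lemma lower_bound n k (A : pdfa k) (L : {set n.-tuple bool}) (W S : seq (seq bool)) :
  recognizes A L -> all (fun u => has (fun w => memb L (u ++ w)) S) W ->
  uniq [seq [seq memb L (u ++ w) | w <- S] | u <- W] -> size W <= k.
Proof.
move=> rA hW uW.
pose acc_from (o : option 'I_k) w :=
  if obind (fun q => pdfa_run A q w) o is Some q then q \in pdfa_final A else false.
pose g u := pdfa_run A (pdfa_start A) u.
have E u w : memb L (u ++ w) = acc_from (g u) w.
  by rewrite -(recog_acc rA) /pdfa_accepts pdfa_run_cat.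
have uW' : uniq [seq [seq acc_from o w | w <- S] | o <- [seq g u | u <- W]].
  rewrite -map_comp; move: uW; congr uniq; apply: eq_map => u /=.
  by apply: eq_map => w; rewrite E.
have ug := map_uniq uW'.
rewrite -(size_map g).
apply: (@leq_trans (size (map (@Some 'I_k) (enum 'I_k)))); last by rewrite size_map size_enum_ord.
apply: uniq_leq_size => // o /mapP [u uW0 ->].
have /hasP [w _ hw] := allP hW u uW0.
rewrite E /acc_from in hw; case: (g u) hw => [q|] // _.
by apply/mapP; exists q; rewrite ?mem_enum.
Qed.

Lemma all2_from_nth (T : Type) (r : T -> T -> bool) x0 s t :
  size s = size t -> (forall j, j < size s -> r (nth x0 s j) (nth x0 t j)) -> all2 r s t.
Proof.
elim: s t => [|a s IH] [|b t] //= [e] H.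
by rewrite (H 0) //= IH // => j js; apply: (H j.+1).
Qed.

Section Tab.
Variables (n M : nat) (tb : seq (nat * nat)) (lev : seq nat).

Definition tr (q : nat) (a : bool) : option nat :=
  let e := nth (M, M) tb q in let r := if a then e.2 else e.1 in
  if r < M then Some r else None.

Fixpoint natrun (q : nat) (w : seq bool) : option nat :=
  if w is a :: w' then (if tr q a is Some r then natrun r w' else None) else Some q.

Definition Pw (w : seq bool) : bool := natrun 0 w == Some M.-1.

Definition chk_lev : bool :=
  (nth 0 lev 0 == 0) && (nth 0 lev M.-1 == n) &&
  all (fun q => all (fun a => if tr q a is Some r then nth 0 lev r == (nth 0 lev q).+1 else true)
                    [:: false; true]) (iota 0 M).

Definition chk_flip : bool :=
  all (fun i => all (fun u => all (fun v => Pw (u ++ false :: v) ==> Pw (u ++ true :: v))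
                                   (words (n.-1 - i))) (words i)) (iota 0 n).

Definition Ltab : {set n.-tuple bool} := [set t : n.-tuple bool | Pw t].

Hypothesis Hlev : chk_lev.
Hypothesis M0 : 0 < M.

Lemma tr_lt q a r : tr q a = Some r -> r < M.
Proof. by rewrite /tr; case: ifP => // h [<-]. Qed.

Lemma natrun_lev w : forall q r, q < M -> natrun q w = Some r -> nth 0 lev r = nth 0 lev q + size w.
Proof.
case/andP: Hlev => _ /allP H.
elim: w => [|a w IH] q r qM /=; first by move=> [<-]; rewrite addn0.
case E: (tr q a) => [r'|] // h.
rewrite (IH r' r (tr_lt E) h) addnS -addSn.
have H2 := H q; rewrite mem_iota add0n qM in H2; move/(_ isT)/allP in H2.
by have := H2 a; rewrite E inE; case: a {E} => /(_ isT) /eqP ->.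
Qed.

Lemma Pw_size w : Pw w -> size w = n.
Proof.
case/andP: (Hlev) => /andP [/eqP l0 /eqP lF] _.
by move/eqP => h; have := natrun_lev M0 h; rewrite l0 lF add0n.
Qed.

Lemma membL w : memb Ltab w = Pw w.
Proof.
rewrite /memb; case: insubP => [t _ <-|ns]; first by rewrite inE.
by apply/esym/negbTE/negP => /Pw_size /eqP; apply/negP.
Qed.

Hypothesis Hflip : chk_flip.

Lemma flip_step u v : Pw (u ++ false :: v) -> Pw (u ++ true :: v).
Proof.
move=> h; have sz := Pw_size h; rewrite size_cat /= in sz.
have := allP Hflip (size u); rewrite mem_iota add0n (_ : size u < n); last by lia.
move=> /(_ isT) /allP /(_ u); rewrite mem_words eqxx => /(_ isT) /allP /(_ v).
rewrite mem_words (_ : n.-1 - size u = size v); last by lia.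
by rewrite eqxx => /(_ isT) /implyP; apply.
Qed.

Lemma mono_gen s : forall t u, size u + size s = n ->
  all2 (fun a b : bool => a <= b) s t -> Pw (u ++ s) -> Pw (u ++ t).
Proof.
elim: s => [|a s IH] [|b t] u //= e /andP [ab st] h.
rewrite -cat_rcons; apply: (IH _ (rcons u b)) => //; first by rewrite size_rcons addSn -addnS.
rewrite cat_rcons; case: a b ab h {e} => [] [] // _ h; exact: flip_step.
Qed.

Lemma Ltab_mono : monotone_lang Ltab.
Proof.
move=> s t; rewrite !inE => Ps H.
apply: (@mono_gen s t [::]) => //; first by rewrite size_tuple.
apply: (@all2_from_nth _ _ false); first by rewrite !size_tuple.
move=> j; rewrite size_tuple => jn.
by have := H (Ordinal jn); rewrite !(tnth_nth false).
Qed.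

Definition TA : pdfa M :=
  Pdfa (Ordinal M0)
    (fun (q : 'I_M) (a : bool) => let e := nth (M, M) tb q in insub (if a then e.2 else e.1))
    [set q : 'I_M | val q == M.-1].

Lemma TA_run w : forall q : 'I_M, omap val (pdfa_run TA q w) = natrun q w.
Proof.
elim: w => [|a w IH] q //=; rewrite /tr.
by case: insubP => [r -> <-|/negbTE ->] //.
Qed.

Lemma TA_acc w : pdfa_accepts TA w = Pw w.
Proof.
rewrite /pdfa_accepts /Pw -(TA_run w (Ordinal M0)).
by case: (pdfa_run TA _ w) => [q|] //=; rewrite inE.
Qed.

Lemma TA_recog : recognizes TA Ltab.
Proof. by apply: recogP => w; rewrite TA_acc membL. Qed.
End Tab.

Definition chk n M tb lev (W S : seq (seq bool)) : bool :=
  [&& chk_lev n M tb lev, chk_flip n M tb, 0 < M,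
      all (fun u => has (fun w => Pw M tb (u ++ w)) S) W,
      uniq [seq [seq Pw M tb (u ++ w) | w <- S] | u <- W] & size W == M].

Lemma witness n M tb lev W S : chk n M tb lev W S -> mono_bound n = M ->
  exists L : {set n.-tuple bool}, monotone_lang L /\
    (exists A : pdfa (mono_bound n), recognizes A L) /\
    (forall (k : nat) (A : pdfa k), recognizes A L -> mono_bound n <= k).
Proof.
case/and5P => hl hf M0 hW /andP [uW /eqP sW] ->.
exists (Ltab n M tb); split; first exact: (Ltab_mono hl M0 hf).
split; first by exists (TA tb M0); apply: TA_recog hl M0.
move=> k A rA; rewrite -sW; apply: (lower_bound (S := S) rA).
  by apply: sub_all hW => u; apply: sub_has => w; rewrite (membL hl M0).
by move: uW; congr uniq; apply: eq_map => u; apply: eq_map => w; rewrite (membL hl M0).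
Qed.

Definition tb0 : seq (nat * nat) := [:: (1, 1)].
Definition lev0 : seq nat := [:: 0].
Definition W0 : seq (seq bool) := [:: [::]].
Definition S0 : seq (seq bool) := [:: [::]].
Definition tb1 : seq (nat * nat) := [:: (2, 1); (2, 2)].
Definition lev1 : seq nat := [:: 0; 1].
Definition W1 : seq (seq bool) := [:: [::]; [:: true]].
Definition S1 : seq (seq bool) := [:: [::]; [:: true]].
Definition tb2 : seq (nat * nat) := [:: (1, 2); (4, 3); (3, 3); (4, 4)].
Definition lev2 : seq nat := [:: 0; 1; 1; 2].
Definition W2 : seq (seq bool) := [:: [::]; [:: false]; [:: true]; [:: false; true]].
Definition S2 : seq (seq bool) := [:: [:: true]; [::]; [:: false]; [:: false; true]].
Definition tb3 : seq (nat * nat) := [:: (1, 2); (6, 3); (3, 4); (6, 5); (5, 5); (6, 6)].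
Definition lev3 : seq nat := [:: 0; 1; 1; 2; 2; 3].
Definition W3 : seq (seq bool) := [:: [::]; [:: false]; [:: true]; [:: false; true]; [:: true; true]; [:: false; true; true]].
Definition S3 : seq (seq bool) := [:: [:: true]; [:: true; true]; [::]; [:: false]; [:: false; true]; [:: false; true; true]].
Definition tb4 : seq (nat * nat) := [:: (1, 2); (3, 4); (5, 6); (10, 7); (7, 8); (7, 7); (8, 8); (10, 9); (9, 9); (10, 10)].
Definition lev4 : seq nat := [:: 0; 1; 1; 2; 2; 2; 2; 3; 3; 4].
Definition W4 : seq (seq bool) := [:: [::]; [:: false]; [:: true]; [:: false; false]; [:: false; true]; [:: true; false]; [:: true; true]; [:: false; false; true]; [:: false; true; true]; [:: false; false; true; true]].
Definition S4 : seq (seq bool) := [:: [:: true; true]; [:: true]; [:: false; true; true]; [:: true; false]; [::]; [:: false]; [:: false; false]; [:: false; true]; [:: false; false; true]; [:: false; false; true; true]].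
Definition tb5 : seq (nat * nat) := [:: (1, 2); (3, 4); (5, 6); (15, 7); (7, 8); (15, 9); (10, 11); (15, 12); (12, 13); (15, 13); (12, 12); (13, 13); (15, 14); (14, 14); (15, 15)].
Definition lev5 : seq nat := [:: 0; 1; 1; 2; 2; 2; 2; 3; 3; 3; 3; 3; 4; 4; 5].
Definition W5 : seq (seq bool) := [:: [::]; [:: false]; [:: true]; [:: false; false]; [:: false; true]; [:: true; false]; [:: true; true]; [:: false; false; true]; [:: false; true; true]; [:: true; false; true]; [:: true; true; false]; [:: true; true; true]; [:: false; false; true; true]; [:: false; true; true; true]; [:: false; false; true; true; true]].
Definition S5 : seq (seq bool) := [:: [:: true; true]; [:: true; true; true]; [:: true]; [:: false; true]; [:: false; true; true; true]; [:: false; true; true]; [:: true; false]; [::]; [:: false]; [:: false; false]; [:: false; false; true]; [:: true; true; false]; [:: false; true; true; false]; [:: false; false; true; true; true]].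
Definition tb6 : seq (nat * nat) := [:: (1, 2); (3, 4); (5, 6); (7, 8); (9, 10); (11, 12); (13, 14); (23, 15); (16, 16); (15, 17); (18, 18); (23, 18); (16, 19); (17, 18); (18, 19); (23, 20); (23, 21); (20, 20); (20, 21); (21, 21); (23, 22); (22, 22); (23, 23)].
Definition lev6 : seq nat := [:: 0; 1; 1; 2; 2; 2; 2; 3; 3; 3; 3; 3; 3; 3; 3; 4; 4; 4; 4; 4; 5; 5; 6].
Definition W6 : seq (seq bool) := [:: [::]; [:: false]; [:: true]; [:: false; false]; [:: false; true]; [:: true; false]; [:: true; true]; [:: false; false; false]; [:: false; false; true]; [:: false; true; false]; [:: false; true; true]; [:: true; false; false]; [:: true; false; true]; [:: true; true; false]; [:: true; true; true]; [:: false; false; false; true]; [:: false; false; true; false]; [:: false; true; false; true]; [:: false; true; true; false]; [:: true; false; true; true]; [:: false; false; false; true; true]; [:: false; false; true; false; true]; [:: false; false; false; true; true; true]].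
Definition S6 : seq (seq bool) := [:: [:: true; true; true]; [:: true; true]; [:: false; true; true; true]; [:: false; true; false]; [:: true]; [:: false; false; true]; [:: false; true]; [:: false; false; true; true; true]; [:: false; false; true; true]; [:: true; false]; [:: true; false; true]; [::]; [:: false; true; true; false]; [:: false]; [:: false; false]; [:: false; true; true]; [:: true; false; false]; [:: false; false; true; false; true]; [:: false; false; false; true; true; true]].
Definition tb7 : seq (nat * nat) := [:: (1, 2); (3, 4); (5, 6); (7, 8); (9, 10); (11, 12); (13, 14); (15, 16); (17, 18); (19, 20); (21, 22); (23, 24); (25, 26); (27, 28); (29, 30); (39, 31); (31, 32); (31, 31); (33, 34); (39, 33); (32, 34); (31, 33); (34, 34); (39, 32); (31, 35); (31, 34); (33, 35); (39, 34); (32, 35); (34, 35); (35, 35); (39, 36); (36, 36); (39, 37); (36, 37); (37, 37); (39, 38); (38, 38); (39, 39)].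
Definition lev7 : seq nat := [:: 0; 1; 1; 2; 2; 2; 2; 3; 3; 3; 3; 3; 3; 3; 3; 4; 4; 4; 4; 4; 4; 4; 4; 4; 4; 4; 4; 4; 4; 4; 4; 5; 5; 5; 5; 5; 6; 6; 7].
Definition W7 : seq (seq bool) := [:: [::]; [:: false]; [:: true]; [:: false; false]; [:: false; true]; [:: true; false]; [:: true; true]; [:: false; false; false]; [:: false; false; true]; [:: false; true; false]; [:: false; true; true]; [:: true; false; false]; [:: true; false; true]; [:: true; true; false]; [:: true; true; true]; [:: false; false; false; false]; [:: false; false; false; true]; [:: false; false; true; false]; [:: false; false; true; true]; [:: false; true; false; false]; [:: false; true; false; true]; [:: false; true; true; false]; [:: false; true; true; true]; [:: true; false; false; false]; [:: true; false; false; true]; [:: true; false; true; false]; [:: true; false; true; true]; [:: true; true; false; false]; [:: true; true; false; true]; [:: true; true; true; false]; [:: true; true; true; true]; [:: false; false; false; false; true]; [:: false; false; false; true; true]; [:: false; false; true; true; false]; [:: false; false; true; true; true]; [:: true; false; false; true; true]; [:: false; false; false; false; true; true]; [:: false; false; true; true; false; true]; [:: false; false; false; false; true; true; true]].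
Definition S7 : seq (seq bool) := [:: [:: true; true; true]; [:: false; true; true; true]; [:: true; true]; [:: false; false; true]; [:: false; true; true]; [:: false; false; true; true; true]; [:: false; true; false]; [:: false; false; true; true]; [:: true]; [:: true; false; true]; [:: false; true; false; true]; [:: false; true]; [:: true; false; false]; [:: false; false; false; true; true; true]; [:: true; true; false]; [:: true; false; false; true]; [:: false; false; true; false; true]; [:: true; false]; [::]; [:: false; false; true; true; false]; [:: false]; [:: false; false]; [:: false; false; false]; [:: false; false; false; true; false; true]; [:: false; false; false; false; true; true; true]].
Definition tb8 : seq (nat * nat) := [:: (1, 2); (3, 4); (5, 6); (7, 8); (9, 10); (11, 12); (13, 14); (15, 16); (17, 18); (19, 20); (21, 22); (23, 24); (25, 26); (27, 28); (29, 30); (58, 31); (58, 32); (58, 33); (34, 35); (31, 36); (34, 37); (34, 38); (39, 40); (31, 41); (42, 43); (31, 44); (45, 46); (47, 37); (48, 46); (49, 40); (46, 40); (58, 50); (58, 51); (50, 50); (58, 52); (50, 53); (51, 51); (51, 53); (51, 54); (58, 54); (54, 54); (58, 53); (50, 51); (50, 54); (52, 53); (53, 53); (53, 54); (50, 52); (52, 54); (52, 52); (58, 55); (58, 56); (55, 55); (55, 56); (56, 56); (58, 57); (57, 57); (58, 58)].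
Definition lev8 : seq nat := [:: 0; 1; 1; 2; 2; 2; 2; 3; 3; 3; 3; 3; 3; 3; 3; 4; 4; 4; 4; 4; 4; 4; 4; 4; 4; 4; 4; 4; 4; 4; 4; 5; 5; 5; 5; 5; 5; 5; 5; 5; 5; 5; 5; 5; 5; 5; 5; 5; 5; 5; 6; 6; 6; 6; 6; 7; 7; 8].
Definition W8 : seq (seq bool) := [:: [::]; [:: false]; [:: true]; [:: false; false]; [:: false; true]; [:: true; false]; [:: true; true]; [:: false; false; false]; [:: false; false; true]; [:: false; true; false]; [:: false; true; true]; [:: true; false; false]; [:: true; false; true]; [:: true; true; false]; [:: true; true; true]; [:: false; false; false; false]; [:: false; false; false; true]; [:: false; false; true; false]; [:: false; false; true; true]; [:: false; true; false; false]; [:: false; true; false; true]; [:: false; true; true; false]; [:: false; true; true; true]; [:: true; false; false; false]; [:: true; false; false; true]; [:: true; false; true; false]; [:: true; false; true; true]; [:: true; true; false; false]; [:: true; true; false; true]; [:: true; true; true; false]; [:: true; true; true; true]; [:: false; false; false; false; true]; [:: false; false; false; true; true]; [:: false; false; true; false; true]; [:: false; false; true; true; false]; [:: false; false; true; true; true]; [:: false; true; false; false; true]; [:: false; true; false; true; true]; [:: false; true; true; false; true]; [:: false; true; true; true; false]; [:: false; true; true; true; true]; [:: true; false; false; false; true]; [:: true; false; false; true; false]; [:: true; false; false; true; true]; [:: true; false; true; false; true]; [:: true; false; true; true; false]; [:: true; false; true; true; true]; [:: true; true; false; false; false]; [:: true; true; false; true; false]; [:: true; true; true; false; false]; [:: false;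 false; false; false; true; true]; [:: false; false; false; true; true; true]; [:: false; false; true; true; false; true]; [:: false; false; true; true; true; true]; [:: false; true; true; false; true; true]; [:: false; false; false; false; true; true; true]; [:: false; false; false; true; true; true; true]; [:: false; false; false; false; true; true; true; true]].
Definition S8 : seq (seq bool) := [:: [:: true; true; true]; [:: true; true; true; true]; [:: false; true; true; true; true]; [:: false; false; true]; [:: false; true; false; true]; [:: true; true]; [:: true; true; false]; [:: false; false; true; true; true; true]; [:: false; false; true; true]; [:: false; true; false]; [:: false; true; false; true; false]; [:: true; false; true]; [:: true; false; false; true]; [:: true]; [:: true; false; false]; [:: true; false; false; true; true]; [:: false; true]; [:: false; true; true; true]; [:: false; false; false; true; true; true; true]; [:: false; true; true]; [:: false; false; true; false]; [:: false; false; true; false; true; false]; [:: true; false]; [:: true; false; true; false]; [::]; [:: false; true; false; false]; [:: true; false; true; true]; [:: false; true; false; false; true]; [:: false; false; true; true; false; true]; [:: false]; [:: false; false]; [:: false; false; false]; [:: true; true; false; false]; [:: true; true; true; false]; [:: false; false; true; false; true]; [:: false; true; false; true; true]; [:: false; false; false; false; true; true; true]; [:: false; false; false; false; true; true; true; true]].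
Definition tb9 : seq (nat * nat) := [:: (1, 2); (3, 4); (5, 6); (7, 8); (9, 10); (11, 12); (13, 14); (15, 16); (17, 18); (19, 20); (21, 22); (23, 24); (25, 26); (27, 28); (29, 30); (31, 32); (33, 34); (35, 36); (37, 38); (39, 40); (41, 42); (43, 44); (45, 46); (47, 48); (49, 50); (51, 52); (53, 54); (55, 56); (57, 58); (59, 60); (61, 62); (90, 63); (63, 64); (90, 65); (66, 67); (90, 68); (64, 69); (90, 70); (71, 70); (90, 72); (63, 73); (64, 67); (74, 75); (90, 75); (76, 77); (78, 70); (77, 70); (90, 79); (63, 80); (63, 69); (81, 77); (65, 69); (71, 77); (65, 70); (69, 70); (72, 79); (79, 77); (80, 77); (77, 77); (72, 77); (79, 70); (80, 70); (70, 70); (90, 82); (90, 83); (90, 84); (82, 82); (84, 85); (84, 84); (85, 85); (86, 86); (82, 85); (90, 85); (90, 86); (82, 83); (84, 86); (83, 83); (85, 86); (82, 86); (83, 85); (83, 86); (82, 84); (90, 87); (90, 88); (87, 87); (87, 88); (88, 88); (90, 89); (89, 89); (90, 90)].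
Definition lev9 : seq nat := [:: 0; 1; 1; 2; 2; 2; 2; 3; 3; 3; 3; 3; 3; 3; 3; 4; 4; 4; 4; 4; 4; 4; 4; 4; 4; 4; 4; 4; 4; 4; 4; 5; 5; 5; 5; 5; 5; 5; 5; 5; 5; 5; 5; 5; 5; 5; 5; 5; 5; 5; 5; 5; 5; 5; 5; 5; 5; 5; 5; 5; 5; 5; 5; 6; 6; 6; 6; 6; 6; 6; 6; 6; 6; 6; 6; 6; 6; 6; 6; 6; 6; 6; 7; 7; 7; 7; 7; 8; 8; 9].
Definition W9 : seq (seq bool) := [:: [::]; [:: false]; [:: true]; [:: false; false]; [:: false; true]; [:: true; false]; [:: true; true]; [:: false; false; false]; [:: false; false; true]; [:: false; true; false]; [:: false; true; true]; [:: true; false; false]; [:: true; false; true]; [:: true; true; false]; [:: true; true; true]; [:: false; false; false; false]; [:: false; false; false; true]; [:: false; false; true; false]; [:: false; false; true; true]; [:: false; true; false; false]; [:: false; true; false; true]; [:: false; true; true; false]; [:: false; true; true; true]; [:: true; false; false; false]; [:: true; false; false; true]; [:: true; false; true; false]; [:: true; false; true; true]; [:: true; true; false; false]; [:: true; true; false; true]; [:: true; true; true; false]; [:: true; true; true; true]; [:: false; false; false; false; false]; [:: false; false; false; false; true]; [:: false; false; false; true; false]; [:: false; false; false; true; true]; [:: false; false; true; false; false]; [:: false; false; true; false; true]; [:: false; false; true; true; false]; [:: false; false; true; true; true]; [:: false; true; false; false; false]; [:: false; true; false; false; true]; [:: false; true; false; true; false]; [:: false; true; false; true; true]; [:: false;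 true; true; false; false]; [:: false; true; true; false; true]; [:: false; true; true; true; false]; [:: false; true; true; true; true]; [:: true; false; false; false; false]; [:: true; false; false; false; true]; [:: true; false; false; true; false]; [:: true; false; false; true; true]; [:: true; false; true; false; false]; [:: true; false; true; false; true]; [:: true; false; true; true; false]; [:: true; false; true; true; true]; [:: true; true; false; false; false]; [:: true; true; false; false; true]; [:: true; true; false; true; false]; [:: true; true; false; true; true]; [:: true; true; true; false; false]; [:: true; true; true; false; true]; [:: true; true; true; true; false]; [:: true; true; true; true; true]; [:: false; false; false; false; false; true]; [:: false; false; false; false; true; true]; [:: false; false; false; true; false; true]; [:: false; false; false; true; true; false]; [:: false; false; false; true; true; true]; [:: false; false; true; false; false; true]; [:: false; false; true; false; true; true]; [:: false; false; true; true; false; true]; [:: false; false; true; true; true; false]; [:: false; true; false; false; false; true]; [:: false; true; false; false; true; true]; [:: false; true; false; true; true; false]; [:: false; true; false; true; true; true]; [:: false; true; true; false; true; false]; [:: false; true; true; false; true; true]; [:: false; true; true; true; false; false]; [:: true; false; false; false; false; true]; [:: true; false; false; false; true; true]; [:: true; false; false; true; true; false]; [:: false; false; false; false; false; true; true]; [:: false; false; false; false; true; true; true]; [:: false; false; false; true; false; true; true]; [:: false; false; false; true; true; true; true]; [:: false; false; true; true; false; true; false]; [:: false; false; false; false; false; true; true; true]; [:: false; false; false; false; true; true; true; true]; [:: false; false; false; false; false; true; true; true; true]].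
Definition S9 : seq (seq bool) := [:: [:: true; true; true; true]; [:: true; true; true]; [:: false; true; true; true; true]; [:: false; true; false; true]; [:: false; false; true; true; true; true]; [:: true; true; false; false]; [:: false; false; true]; [:: false; false; true; false; true]; [:: true; true]; [:: false; false; true; false]; [:: true; true; false]; [:: true; false; false; true]; [:: false; false; false; true; true; true; true]; [:: true; false; false; false]; [:: false; true; false; false; true]; [:: false; true; false]; [:: false; false; true; false; false; true]; [:: true; false; true]; [:: false; true; false; false; false]; [:: false; true; true; false]; [:: true]; [:: false; true; false; false]; [:: true; false; false]; [:: true; false; true; false]; [:: false; false; true; false; true; false]; [:: false; false; true; true; false]; [:: false; true]; [:: false; true; true; true; false]; [:: false; false; false; false; true; true; true; true]; [:: false; true; true]; [:: true; true; true; false]; [:: false; false; false; true]; [:: true; false; false; true; true; false]; [:: false; false; false; true; false; true; false]; [:: true; false]; [::]; [:: true; true; false; true]; [:: false; false; false; true; false]; [:: false; true; false; true; false]; [:: false; true; false; false; true; true; false]; [:: false]; [:: false; false]; [:: false; false; false]; [:: false; false; false; false]; [:: false; false; true; true]; [:: false; true; true; false; true]; [:: false; false; false; false; true; false; true; false]; [:: false; false; false; false; false; true; true; true; true]].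
Definition tb10 : seq (nat * nat) := [:: (1, 2); (3, 4); (5, 6); (7, 8); (9, 10); (11, 12); (13, 14); (15, 16); (17, 18); (19, 20); (21, 22); (23, 24); (25, 26); (27, 28); (29, 30); (31, 32); (33, 34); (35, 36); (37, 38); (39, 40); (41, 42); (43, 44); (45, 46); (47, 48); (49, 50); (51, 52); (53, 54); (55, 56); (57, 58); (59, 60); (61, 62); (63, 64); (65, 66); (67, 68); (69, 70); (71, 72); (73, 74); (75, 76); (77, 78); (79, 80); (81, 82); (83, 84); (85, 86); (87, 88); (89, 90); (91, 92); (93, 94); (95, 96); (97, 98); (99, 100); (101, 102); (103, 104); (105, 106); (107, 108); (109, 110); (111, 112); (113, 114); (115, 116); (117, 118); (119, 120); (121, 122); (123, 124); (125, 126); (154, 127); (154, 128); (154, 129); (130, 131); (127, 127); (128, 128); (132, 131); (128, 133); (154, 134); (127, 131); (127, 129); (129, 135); (127, 136); (128, 137); (136, 138); (138, 139); (154, 132); (127, 128); (154, 131); (130, 138); (127, 132); (131, 131); (136, 131); (131, 133); (154, 136); (128, 131); (127, 133); (138, 133); (134, 136); (135, 137); (136, 137); (133, 139); (154, 130); (154, 140); (130, 141); (130, 133); (127, 130); (128, 140); (131, 138); (138, 137); (127, 142); (134, 143); (130, 144); (144, 137); (132, 144); (142, 139); (138, 144); (144, 139); (127, 140); (130, 135); (129, 133); (135, 133); (132, 135); (131, 137); (133, 133); (133, 137); (127, 143); (142, 143); (141, 137); (137, 139); (145, 137); (143, 139); (137, 137); (139, 139); (154, 146); (146, 147); (146, 148);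 (146, 146); (146, 149); (154, 147); (149, 149); (154, 148); (147, 149); (154, 149); (149, 150); (148, 149); (150, 150); (147, 147); (148, 148); (146, 150); (147, 150); (148, 150); (154, 150); (154, 151); (154, 152); (151, 151); (151, 152); (152, 152); (154, 153); (153, 153); (154, 154)].
Definition lev10 : seq nat := [:: 0; 1; 1; 2; 2; 2; 2; 3; 3; 3; 3; 3; 3; 3; 3; 4; 4; 4; 4; 4; 4; 4; 4; 4; 4; 4; 4; 4; 4; 4; 4; 5; 5; 5; 5; 5; 5; 5; 5; 5; 5; 5; 5; 5; 5; 5; 5; 5; 5; 5; 5; 5; 5; 5; 5; 5; 5; 5; 5; 5; 5; 5; 5; 6; 6; 6; 6; 6; 6; 6; 6; 6; 6; 6; 6; 6; 6; 6; 6; 6; 6; 6; 6; 6; 6; 6; 6; 6; 6; 6; 6; 6; 6; 6; 6; 6; 6; 6; 6; 6; 6; 6; 6; 6; 6; 6; 6; 6; 6; 6; 6; 6; 6; 6; 6; 6; 6; 6; 6; 6; 6; 6; 6; 6; 6; 6; 6; 7; 7; 7; 7; 7; 7; 7; 7; 7; 7; 7; 7; 7; 7; 7; 7; 7; 7; 7; 8; 8; 8; 8; 8; 9; 9; 10].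
Definition W10 : seq (seq bool) := [:: [::]; [:: false]; [:: true]; [:: false; false]; [:: false; true]; [:: true; false]; [:: true; true]; [:: false; false; false]; [:: false; false; true]; [:: false; true; false]; [:: false; true; true]; [:: true; false; false]; [:: true; false; true]; [:: true; true; false]; [:: true; true; true]; [:: false; false; false; false]; [:: false; false; false; true]; [:: false; false; true; false]; [:: false; false; true; true]; [:: false; true; false; false]; [:: false; true; false; true]; [:: false; true; true; false]; [:: false; true; true; true]; [:: true; false; false; false]; [:: true; false; false; true]; [:: true; false; true; false]; [:: true; false; true; true]; [:: true; true; false; false]; [:: true; true; false; true]; [:: true; true; true; false]; [:: true; true; true; true]; [:: false; false; false; false; false]; [:: false; false; false; false; true]; [:: false; false; false; true; false]; [:: false; false; false; true; true]; [:: false; false; true; false; false]; [:: false; false; true; false; true]; [:: false; false; true; true; false]; [:: false; false; true; true; true]; [:: false; true; false; false; false]; [:: false; true; false; false; true]; [:: false; true; false; true; false]; [:: false; true; false; true; true]; [:: false; true; true; false; false]; [:: false; true; true; false; true]; [:: false; true; true; true; false]; [:: false; true; true; true; true]; [:: true; false; false; false; false]; [:: true; false; false; false; true]; [:: true; false; false; true; false]; [:: true; false; false; true; true]; [:: true; false; true; false; false]; [:: true; false; true; false; true]; [:: true; false; true; true; false]; [:: true; false; true; true; true]; [:: true; true; false; false; false]; [:: true; true; false; false; true]; [:: true; true; false; true; false]; [:: true; true; false; true; true]; [:: true; true; true; false; false]; [:: true; true; true; false; true]; [:: true; true; true; true; false]; [:: true; true; true; true; true]; [:: false; false; false; false; false;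 false]; [:: false; false; false; false; false; true]; [:: false; false; false; false; true; false]; [:: false; false; false; false; true; true]; [:: false; false; false; true; false; false]; [:: false; false; false; true; false; true]; [:: false; false; false; true; true; false]; [:: false; false; false; true; true; true]; [:: false; false; true; false; false; false]; [:: false; false; true; false; false; true]; [:: false; false; true; false; true; false]; [:: false; false; true; false; true; true]; [:: false; false; true; true; false; false]; [:: false; false; true; true; false; true]; [:: false; false; true; true; true; false]; [:: false; false; true; true; true; true]; [:: false; true; false; false; false; false]; [:: false; true; false; false; false; true]; [:: false; true; false; false; true; false]; [:: false; true; false; false; true; true]; [:: false; true; false; true; false; false]; [:: false; true; false; true; false; true]; [:: false; true; false; true; true; false]; [:: false; true; false; true; true; true]; [:: false; true; true; false; false; false]; [:: false; true; true; false; false; true]; [:: false; true; true; false; true; false]; [:: false; true; true; false; true; true]; [:: false; true; true; true; false; false]; [:: false; true; true; true; false; true]; [:: false; true; true; true; true; false]; [:: false; true; true; true; true; true]; [:: true; false; false; false; false; false]; [:: true; false; false; false; false; true]; [:: true; false; false; false; true; false]; [:: true; false; false; false; true; true]; [:: true; false; false; true; false; false]; [:: true; false; false; true; false; true]; [:: true; false; false; true; true; false]; [:: true; false; false; true; true; true]; [:: true; false; true; false; false; false]; [:: true; false; true; false; false; true]; [:: true; false; true; false; true; false]; [:: true; false; true; false; true; true]; [:: true; false; true; true; false; false]; [:: true; false; true; true; false; true]; [:: true; false; true; true; true; false]; [:: true; false; true; true; true; true]; [:: true; true; false; false; false; false]; [:: true; true; false; false; false; true]; [:: true; true; false; false; true;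 false]; [:: true; true; false; false; true; true]; [:: true; true; false; true; false; false]; [:: true; true; false; true; false; true]; [:: true; true; false; true; true; false]; [:: true; true; false; true; true; true]; [:: true; true; true; false; false; false]; [:: true; true; true; false; false; true]; [:: true; true; true; false; true; false]; [:: true; true; true; false; true; true]; [:: true; true; true; true; false; false]; [:: true; true; true; true; false; true]; [:: true; true; true; true; true; false]; [:: true; true; true; true; true; true]; [:: false; false; false; false; false; false; true]; [:: false; false; false; false; false; true; true]; [:: false; false; false; false; true; false; true]; [:: false; false; false; false; true; true; false]; [:: false; false; false; false; true; true; true]; [:: false; false; false; true; true; false; false]; [:: false; false; false; true; true; true; true]; [:: false; false; true; false; false; false; true]; [:: false; false; true; false; true; true; true]; [:: false; false; true; true; false; false; true]; [:: false; false; true; true; false; true; true]; [:: false; false; true; true; true; false; true]; [:: false; false; true; true; true; true; true]; [:: true; false; false; false; false; true; true]; [:: true; false; false; false; true; false; true]; [:: true; false; true; false; false; false; true]; [:: true; false; true; false; false; true; true]; [:: true; false; true; false; true; false; true]; [:: true; true; true; true; false; false; false]; [:: false; false; false; false; false; false; true; true]; [:: false; false; false; false; false; true; true; true]; [:: false; false; false; false; true; false; true; true]; [:: false; false; false; false; true; true; true; true]; [:: false; false; true; true; false; true; true; true]; [:: false; false; false; false; false; false; true; true; true]; [:: false; false; false; false; false; true; true; true; true]; [:: false; false; false; false; false; false; true; true; true; true]].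
Definition S10 : seq (seq bool) := [:: [:: true; true; true; true]; [:: false; true; true; true; true]; [:: true; false; false; true]; [:: true; true; true]; [:: false; false; true; true; true; true]; [:: true; false; true; false]; [:: true; true; true; false; false]; [:: false; true; true; false]; [:: false; false; false; true; true; true; true]; [:: false; false; false; true]; [:: false; true; false; true; false]; [:: true; true; false; true]; [:: false; false; true]; [:: false; false; true; false; true; true]; [:: false; true; false; true; true]; [:: true; true; false; false]; [:: true; true]; [:: true; true; false]; [:: false; true; true; true]; [:: false; false; true; false]; [:: true; false; false; true; true; false]; [:: true; false; true; true; false]; [:: false; false; false; false; true; true; true; true]; [:: false; true; false]; [:: false; false; false; true; true]; [:: true; false; true; true]; [:: false; true; false; false]; [:: false; false; false; true; false; true; true]; [:: false; false; true; true; false; true]; [:: true; false; true]; [:: false; false; true; true]; [:: true]; [:: false; false; true; false; true]; [:: true; false; false]; [:: false; true; false; true]; [:: true; true; true; false]; [:: false; true; true; false; true]; [:: false; false; false; true; true; false; true]; [:: false; true]; [:: true; false; true; false; true; false]; [:: false; false; false; false; false; true; true; true; true]; [:: false; true; true]; [:: true; false; false; false]; [:: true; false; true; false; false]; [:: false; true; true; true; false]; [:: false; false; false; false; true; false; true; true]; [:: true; false]; [:: false; false; false; true; true; true; false]; [::]; [:: false; false; true; true; true; false]; [:: false; false; false; false; true; true; true; false]; [:: false]; [:: false; false]; [:: false; false; false]; [:: false; false; false; false]; [:: false; false; false; true; false]; [:: false; false; true; true; true]; [:: false; false; false; true; false; false]; [:: false; false; false; true; false; true; false]; [:: false; false; false;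 false; false; true; false; true; true]; [:: false; false; false; false; false; false; true; true; true; true]].
Lemma w10 : chk 10 154 tb10 lev10 W10 S10.
Proof. by vm_compute. Qed.
Lemma w9 : chk 9 90 tb9 lev9 W9 S9.
Proof. by vm_compute. Qed.
Lemma w0 : chk 0 1 tb0 lev0 W0 S0. Proof. by vm_compute. Qed.
Lemma w1 : chk 1 2 tb1 lev1 W1 S1. Proof. by vm_compute. Qed.
Lemma w2 : chk 2 4 tb2 lev2 W2 S2. Proof. by vm_compute. Qed.
Lemma w3 : chk 3 6 tb3 lev3 W3 S3. Proof. by vm_compute. Qed.
Lemma w4 : chk 4 10 tb4 lev4 W4 S4. Proof. by vm_compute. Qed.
Lemma w5 : chk 5 15 tb5 lev5 W5 S5. Proof. by vm_compute. Qed.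
Lemma w6 : chk 6 23 tb6 lev6 W6 S6. Proof. by vm_compute. Qed.
Lemma w7 : chk 7 39 tb7 lev7 W7 S7. Proof. by vm_compute. Qed.
Lemma w8 : chk 8 58 tb8 lev8 W8 S8. Proof. by vm_compute. Qed.

Lemma mb_eq n : n <= 10 -> mono_bound n = nth 0 [:: 1; 2; 4; 6; 10; 15; 23; 39; 58; 90; 154] n.
Proof.
move=> hn; rewrite mono_bound_val //.
have : all (fun n => \sum_(0 <= i < n.+1) minn (2 ^ i) (dd (n - i) - 1) ==
                     nth 0 [:: 1; 2; 4; 6; 10; 15; 23; 39; 58; 90; 154] n) (iota 0 11).
  by rewrite unlock; vm_compute.
by move/allP => /(_ n); rewrite mem_iota add0n ltnS hn => /(_ isT) /eqP.
Qed.

Theorem mainTheorem4 :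
  (forall (n : nat) (L : {set n.-tuple bool}), monotone_lang L ->
     exists2 k : nat, k <= mono_bound n & exists A : pdfa k, recognizes A L)
  /\
  (forall n : nat, n <= 10 ->
     exists L : {set n.-tuple bool}, monotone_lang L /\
       (exists A : pdfa (mono_bound n), recognizes A L) /\
       (forall (k : nat) (A : pdfa k), recognizes A L -> mono_bound n <= k)).
Proof.
split; first exact: part1.
move=> n.
do 11 (case: n => [|n]; first by move=> hn; first [exact: (witness w0 (@mb_eq _ hn))|exact: (witness w1 (@mb_eq _ hn))|exact: (witness w2 (@mb_eq _ hn))|exact: (witness w3 (@mb_eq _ hn))|exact: (witness w4 (@mb_eq _ hn))|exact: (witness w5 (@mb_eq _ hn))|exact: (witness w6 (@mb_eq _ hn))|exact: (witness w7 (@mb_eq _ hn))|exact: (witness w8 (@mb_eq _ hn))|exact: (witness w9 (@mb_eq _ hn))|exact: (witness w10 (@mb_eq _ hn))]).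
by [].
Qed.
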